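(* For every metric space $(X,d_X)$ with finite asymptotic dimension there exists a metric $d_X'$ on $X$ such that the identity $(X,d_X)\to(X,d_X')$ is a coarse equivalence, $\operatorname{asdim}_{AN}(X,d_X')=\operatorname{asdim}(X,d_X)$, and every asymptotic cone of $(X,d_X')$ is an ultrametric space. Moreover, if $X$ is a countable group and $d_X$ is a proper left invariant metric, then $d_X'$ can be taken to be a proper left invariant metric.
   Context: An $s$-scale chain ($s>0$) is a finite sequence $x_0,\dots,x_m$ with $d(x_i,x_{i+1})<s$; $s$-scale connected components of a subset $U$ are classes of ''joined by an $s$-scale chain inside $U$''. A nondecreasing $D\colon\mathbb{R}_+\to\mathbb{R}_+$ is an $n$-dimensional control function if for each $s>0$ there is a cover $\{\mathcal U_0,\dots,\mathcal U_n\}$ of $X$ whose members have $s$-scale components of diameter $\le D(s)$. $\operatorname{asdim}(X)\le n$ if some $n$-dimensional control function exists; $\operatorname{asdim}_{AN}(X)\le n$ if one of the form $Cs+k$ ($C>0,k\in\mathbb{R}$) exists. A map $f$ is a coarse embedding if $\rho_-(d(x,y))\le d(f(x),f(y))\le\rho_+(d(x,y))$ for nondecreasing $\rho_\pm$ with $\rho_-\to\infty$; it is a coarse equivalence if moreover its image is $K$-dense for some $K$. A metric $d_G$ on a group $G$ is proper left invariant if $d_G(gh,gk)=d_G(h,k)$ for all $g,h,k$ and every ball is finite. Asymptotic cones $\operatorname{Cone}_\omega(X,c,d)$: for a non-principal ultrafilter $\omega$ on $\mathbb{N}$, a sequence $c$ in $X$ and positive reals $d_n$ with $\lim_\omega d_n=\infty$,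 the set of sequences $(x_n)$ with $\lim_\omega d(x_n,c_n)/d_n<\infty$ with pseudometric $\lim_\omega d(x_n,y_n)/d_n$, modulo distance zero. Ultrametric: $d(x,y)\le\max\{d(x,z),d(y,z)\}$. *)

(* Defs.v *)
From Stdlib Require Import Reals Lra List Relations.
Open Scope R_scope.

Section Defs.
Context {X : Type}.

Definition is_metric (d : X -> X -> R) : Prop :=
  (forall x y, 0 <= d x y) /\
  (forall x y, d x y = 0 <-> x = y) /\
  (forall x y, d x y = d y x) /\
  (forall x y z, d x z <= d x y + d y z).

Definition chain_step (d : X -> X -> R) (s : R) (U : X -> Prop) (a b : X) : Prop :=
  U a /\ U b /\ d a b < s.

(* x and y are joined by an s-scale chain inside U (same s-scale component) *)
Definition scale_connected (d : X -> X -> R) (s : R) (U : X -> Prop) (x y : X) : Prop :=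
  U x /\ clos_refl_trans X (chain_step d s U) x y.

Definition components_bounded (d : X -> X -> R) (s : R) (U : X -> Prop) (B : R) : Prop :=
  forall x y, scale_connected d s U x y -> d x y <= B.

Definition control_function (d : X -> X -> R) (n : nat) (D : R -> R) : Prop :=
  (forall s t, 0 < s -> s <= t -> D s <= D t) /\
  (forall s, 0 < s -> 0 <= D s) /\
  (forall s, 0 < s ->
     exists U : nat -> X -> Prop,
       (forall x, exists i, (i <= n)%nat /\ U i x) /\
       (forall i, (i <= n)%nat -> components_bounded d s (U i) (D s))).

Definition asdim_le (d : X -> X -> R) (n : nat) : Prop :=
  exists D, control_function d n D.

Definition asdim_AN_le (d : X -> X -> R) (n : nat) : Prop :=
  exists C k : R, 0 < C /\ control_function d n (fun s => C * s + k).

Definition finite_asdim (d : X -> X -> R) : Prop := exists n, asdim_le d n.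

Definition nondecreasing_nonneg (rho : R -> R) : Prop :=
  forall u v, 0 <= u -> u <= v -> rho u <= rho v.

Definition coarse_embedding {Y : Type} (d : X -> X -> R) (d' : Y -> Y -> R) (f : X -> Y) : Prop :=
  exists rm rp : R -> R,
    nondecreasing_nonneg rm /\ nondecreasing_nonneg rp /\
    (forall M, exists t, forall u, t <= u -> M <= rm u) /\
    (forall x y, rm (d x y) <= d' (f x) (f y) /\ d' (f x) (f y) <= rp (d x y)).

Definition coarse_equivalence {Y : Type} (d : X -> X -> R) (d' : Y -> Y -> R) (f : X -> Y) : Prop :=
  coarse_embedding d d' f /\
  exists K, 0 <= K /\ forall y, exists x, d' (f x) y <= K.

End Defs.

Definition ultrafilter (w : (nat -> Prop) -> Prop) : Prop :=
  (forall A B : nat -> Prop, (forall n, A n -> B n) -> w A -> w B) /\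
  (forall A B : nat -> Prop, w A -> w B -> w (fun n => A n /\ B n)) /\
  ~ w (fun _ => False) /\
  (forall A : nat -> Prop, w A \/ w (fun n => ~ A n)).

Definition nonprincipal (w : (nat -> Prop) -> Prop) : Prop :=
  forall m : nat, ~ w (fun n => n = m).

Definition ulim (w : (nat -> Prop) -> Prop) (a : nat -> R) (L : R) : Prop :=
  forall eps, 0 < eps -> w (fun n => Rabs (a n - L) < eps).

Definition ulim_infty (w : (nat -> Prop) -> Prop) (a : nat -> R) : Prop :=
  forall M, w (fun n => M < a n).

Section Cones.
Context {X : Type}.

(* points of Cone_w(X, c, r): sequences with lim_w d(x_n, c_n)/r_n < infinity *)
Definition in_cone (d : X -> X -> R) (w : (nat -> Prop) -> Prop) (c : nat -> X)
  (r : nat -> R) (x : nat -> X) : Prop :=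
  exists L, ulim w (fun n => d (x n) (c n) / r n) L.

Definition cone_ultrametric (d : X -> X -> R) (w : (nat -> Prop) -> Prop) (c : nat -> X)
  (r : nat -> R) : Prop :=
  forall x y z : nat -> X,
    in_cone d w c r x -> in_cone d w c r y -> in_cone d w c r z ->
    forall Lxy Lxz Lyz : R,
      ulim w (fun n => d (x n) (y n) / r n) Lxy ->
      ulim w (fun n => d (x n) (z n) / r n) Lxz ->
      ulim w (fun n => d (y n) (z n) / r n) Lyz ->
      Lxy <= Rmax Lxz Lyz.

Definition all_cones_ultrametric (d : X -> X -> R) : Prop :=
  forall (w : (nat -> Prop) -> Prop) (c : nat -> X) (r : nat -> R),
    ultrafilter w -> nonprincipal w ->
    (forall n, 0 < r n) -> ulim_infty w r ->
    cone_ultrametric d w c r.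

Definition good_remetrization (d d' : X -> X -> R) : Prop :=
  is_metric d' /\
  coarse_equivalence d d' (fun x => x) /\
  (forall n, asdim_AN_le d' n <-> asdim_le d n) /\
  all_cones_ultrametric d'.

End Cones.

Section Groups.
Context {G : Type}.

Definition is_group (mul : G -> G -> G) (inv : G -> G) (e : G) : Prop :=
  (forall a b c, mul (mul a b) c = mul a (mul b c)) /\
  (forall a, mul e a = a) /\ (forall a, mul a e = a) /\
  (forall a, mul (inv a) a = e) /\ (forall a, mul a (inv a) = e).

Definition countable_type : Prop :=
  exists f : G -> nat, forall a b, f a = f b -> a = b.

Definition left_invariant (mul : G -> G -> G) (d : G -> G -> R) : Prop :=
  forall g h k, d (mul g h) (mul g k) = d h k.

Definition proper_balls (d : G -> G -> R) : Prop :=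
  forall (g : G) (rad : R), exists l : list G, forall h, d g h <= rad -> In h l.

Definition proper_left_invariant_metric (mul : G -> G -> G) (d : G -> G -> R) : Prop :=
  is_metric d /\ left_invariant mul d /\ proper_balls d.

End Groups.

(* Main.v *)
Require Import Defs.
From Stdlib Require Import Reals.
From Stdlib Require Import Lra Lia ZArith Relations ClassicalEpsilon Classical List.
Open Scope R_scope.

Lemma nat_between (s : R) : 0 < s -> exists K : nat, s <= INR K <= s + 1.
Proof.
  intros Hs. destruct (archimed s) as [H1 H2].
  assert (Hz : (0 < up s)%Z) by (apply lt_0_IZR; lra).
  exists (Z.to_nat (up s)). rewrite INR_IZR_INZ, Z2Nat.id by lia. lra.
Qed.

Lemma nat_above (u : R) : exists N : nat, u <= INR N.
Proof.
  destruct (Rle_or_lt u 0) as [h|h].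
  - exists 0%nat. simpl. lra.
  - destruct (nat_between u h) as [K HK]. exists K. lra.
Qed.

Fixpoint tt (D : R -> R) (k : nat) : R :=
  match k with O => 0 | S k' => 2 * tt D k' + Rabs (D (tt D k' + 1)) + 1 end.

Section T.
Variable D : R -> R.

Lemma tt_nonneg k : 0 <= tt D k.
Proof. induction k; simpl; [lra|]. pose proof (Rabs_pos (D (tt D k + 1))); lra. Qed.

Lemma tt_S k : 2 * tt D k + 1 <= tt D (S k).
Proof. simpl. pose proof (Rabs_pos (D (tt D k + 1))); lra. Qed.

Lemma tt_D k : D (tt D k + 1) < tt D (S k).
Proof. simpl. pose proof (Rle_abs (D (tt D k + 1))). pose proof (tt_nonneg k). lra. Qed.

Lemma tt_mono i j : (i <= j)%nat -> tt D i <= tt D j.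
Proof. induction 1; [lra|]. pose proof (tt_S m); pose proof (tt_nonneg m); lra. Qed.

Lemma tt_lt_inv i j : tt D i < tt D j -> (i < j)%nat.
Proof.
  intros H. destruct (Nat.lt_ge_cases i j) as [h|h]; auto.
  pose proof (tt_mono _ _ h); lra.
Qed.

Lemma tt_ge_INR k : INR k <= tt D k.
Proof.
  induction k. simpl; lra. rewrite S_INR. pose proof (tt_S k); pose proof (tt_nonneg k); lra.
Qed.

Lemma hn_ex u : 0 <= u -> exists k, tt D k <= u < tt D (S k).
Proof.
  intros Hu.
  assert (HN: forall N, u < tt D N -> exists k, tt D k <= u < tt D (S k)).
  { induction N; intros H. simpl in H; lra.
    destruct (Rlt_or_le u (tt D N)) as [h|h]; [apply IHN; auto| exists N; lra]. }
  destruct (nat_above (u + 1)) as [N HN']. apply (HN N).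
  pose proof (tt_ge_INR N). lra.
Qed.

Definition hn (u : R) : nat := epsilon (inhabits 0%nat) (fun k => tt D k <= u < tt D (S k)).

Lemma hn_spec u : 0 <= u -> tt D (hn u) <= u < tt D (S (hn u)).
Proof. intros Hu. unfold hn. apply epsilon_spec. apply hn_ex; auto. Qed.

Lemma hn_mono u v : 0 <= u -> u <= v -> (hn u <= hn v)%nat.
Proof.
  intros H1 H2. pose proof (hn_spec u H1). pose proof (hn_spec v ltac:(lra)).
  assert (tt D (hn u) < tt D (S (hn v))) by lra. apply tt_lt_inv in H3. lia.
Qed.

Lemma hn_lt u j : 0 <= u -> u < tt D j -> (hn u < j)%nat.
Proof.
  intros H1 H2. pose proof (hn_spec u H1). apply tt_lt_inv. lra.
Qed.

Lemma hn_ge u j : 0 <= u -> tt D j <= u -> (j <= hn u)%nat.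
Proof.
  intros H1 H2. pose proof (hn_spec u H1).
  assert (tt D j < tt D (S (hn u))) by lra. apply tt_lt_inv in H0. lia.
Qed.

Lemma hn_add a b : 0 <= a -> 0 <= b -> (hn (a+b) <= S (Nat.max (hn a) (hn b)))%nat.
Proof.
  intros Ha Hb. set (j := S (Nat.max (hn a) (hn b))).
  pose proof (hn_spec a Ha). pose proof (hn_spec b Hb).
  assert (tt D (S (hn a)) <= tt D j) by (apply tt_mono; unfold j; lia).
  assert (tt D (S (hn b)) <= tt D j) by (apply tt_mono; unfold j; lia).
  pose proof (tt_S j).
  assert (hn (a+b) < S j)%nat by (apply hn_lt; lra). lia.
Qed.

Definition phi (u : R) : R := if Rle_dec u 0 then 0 else 1 + INR (hn u).

Lemma phi_nonneg u : 0 <= phi u.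
Proof. unfold phi. destruct (Rle_dec u 0). lra. pose proof (pos_INR (hn u)); lra. Qed.

Lemma phi_le_hn u : phi u <= 1 + INR (hn u).
Proof. unfold phi. destruct (Rle_dec u 0). pose proof (pos_INR (hn u)); lra. lra. Qed.

Lemma phi_pos u : 0 < u -> phi u = 1 + INR (hn u).
Proof. intros. unfold phi. destruct (Rle_dec u 0). lra. auto. Qed.

Lemma phi_mono u v : 0 <= u -> u <= v -> phi u <= phi v.
Proof.
  intros H1 H2. unfold phi.
  destruct (Rle_dec u 0); destruct (Rle_dec v 0).
  - lra.
  - pose proof (pos_INR (hn v)); lra.
  - lra.
  - apply Rplus_le_compat_l. apply le_INR. apply hn_mono; lra.
Qed.

Lemma phi_zero u : 0 <= u -> (phi u = 0 <-> u = 0).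
Proof.
  intros H. unfold phi. destruct (Rle_dec u 0); split; intros; try lra.
  pose proof (pos_INR (hn u)); lra.
Qed.

Lemma phi_add a b : 0 <= a -> 0 <= b -> phi (a+b) <= Rmax (phi a) (phi b) + 1.
Proof.
  intros Ha Hb.
  destruct (Rle_or_lt a 0) as [h|h].
  { replace (a + b) with b by lra. pose proof (Rmax_r (phi a) (phi b)); lra. }
  destruct (Rle_or_lt b 0) as [h'|h'].
  { replace (a + b) with a by lra. pose proof (Rmax_l (phi a) (phi b)); lra. }
  rewrite (phi_pos (a+b)) by lra. rewrite (phi_pos a), (phi_pos b) by lra.
  pose proof (hn_add a b Ha Hb) as Hh. apply le_INR in Hh. rewrite S_INR in Hh.
  destruct (Nat.le_ge_cases (hn a) (hn b)) as [c|c].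
  - rewrite Nat.max_r in Hh by auto. pose proof (Rmax_r (1 + INR (hn a)) (1 + INR (hn b))). lra.
  - rewrite Nat.max_l in Hh by auto. pose proof (Rmax_l (1 + INR (hn a)) (1 + INR (hn b))). lra.
Qed.

Lemma phi_tri a b : 0 <= a -> 0 <= b -> phi (a+b) <= phi a + phi b.
Proof.
  intros Ha Hb.
  destruct (Rle_or_lt a 0) as [h|h].
  { replace (a + b) with b by lra. pose proof (phi_nonneg a); lra. }
  destruct (Rle_or_lt b 0) as [h'|h'].
  { replace (a + b) with a by lra. pose proof (phi_nonneg b); lra. }
  pose proof (phi_add a b Ha Hb). rewrite (phi_pos a), (phi_pos b) in * by lra.
  pose proof (pos_INR (hn a)); pose proof (pos_INR (hn b)).
  unfold Rmax in H. destruct (Rle_dec _ _); lra.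
Qed.

End T.

Section Gen.
Variable X : Type.

Lemma sc_map (d1 d2 : X -> X -> R) s1 s2 (V U : X -> Prop) :
  (forall a b, V a -> V b -> d1 a b < s1 -> d2 a b < s2) -> (forall z, V z -> U z) ->
  forall x y, scale_connected d1 s1 V x y -> scale_connected d2 s2 U x y.
Proof.
  intros Hd HVU x y [Hx Hrt]. split; auto. clear Hx.
  induction Hrt.
  - apply rt_step. destruct H as [h1 [h2 h3]]. repeat split; auto.
  - apply rt_refl.
  - eapply rt_trans; eauto.
Qed.

Lemma least (P : nat -> Prop) : (exists n, P n) -> exists m, P m /\ forall n, P n -> (m <= n)%nat.
Proof.
  intros [n Hn]. revert Hn.
  induction n as [n IH] using (well_founded_induction lt_wf). intros Hn.
  destruct (classic (exists k, (k < n)%nat /\ P k)) as [[k [Hk Pk]]|Hno].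
  - apply (IH k); auto.
  - exists n; split; auto. intros j Pj. destruct (Nat.lt_ge_cases j n); auto.
    exfalso; apply Hno; eauto.
Qed.

Lemma cf_mono (d : X -> X -> R) m n D : control_function d m D -> (m <= n)%nat -> control_function d n D.
Proof.
  intros [H1 [H2 H3]] Hmn. split; [auto|split; [auto|]].
  intros s Hs. destruct (H3 s Hs) as [U [Hc Hb]].
  exists (fun i x => (i <= m)%nat /\ U i x). split.
  - intros x. destruct (Hc x) as [i [Hi Hu]]. exists i. split; [lia|auto].
  - intros i Hi x y Hxy. pose proof Hxy as [[Him _] _].
    apply (Hb i Him). eapply sc_map; [| |exact Hxy]; auto. intros z [_ hz]; auto.
Qed.

Definition dd (d : X -> X -> R) (D : R -> R) (x y : X) : R := phi D (d x y).

Lemma dd_metric d D : is_metric d -> is_metric (dd d D).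
Proof.
  intros [Hn [Hz [Hs Ht]]]. unfold dd. split; [|split; [|split]].
  - intros; apply phi_nonneg.
  - intros x y. rewrite phi_zero by auto. apply Hz.
  - intros x y. rewrite Hs. auto.
  - intros x y z. eapply Rle_trans. apply phi_mono; [apply Hn| apply Ht].
    apply phi_tri; auto.
Qed.

Lemma dd_ult d D : is_metric d -> forall x y z, dd d D x y <= Rmax (dd d D x z) (dd d D y z) + 1.
Proof.
  intros [Hn [Hz [Hs Ht]]] x y z. unfold dd. eapply Rle_trans.
  apply phi_mono; [apply Hn| apply (Ht x z y)]. rewrite (Hs z y).
  apply phi_add; auto.
Qed.

Lemma cone_ult (d' : X -> X -> R) :
  (forall x y z, d' x y <= Rmax (d' x z) (d' y z) + 1) -> all_cones_ultrametric d'.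
Proof.
  intros Hu w c r Hw Hnp Hr Hinf x y z _ _ _ Lxy Lxz Lyz H1 H2 H3.
  destruct (Rle_or_lt Lxy (Rmax Lxz Lyz)) as [h|h]; auto. exfalso.
  set (eps := (Lxy - Rmax Lxz Lyz)/3).
  assert (He : 0 < eps) by (unfold eps; lra).
  destruct Hw as [Hmono [Hint [Hnf _]]].
  pose proof (Hint _ _ (H1 eps He) (Hint _ _ (H2 eps He) (Hint _ _ (H3 eps He) (Hinf (/eps))))) as A.
  apply Hnf. eapply Hmono; [|exact A]. simpl. intros n [a [b [cc e]]].
  pose proof (Hr n) as Hrn.
  assert (Hq : / r n < eps).
  { rewrite <- (Rinv_inv eps). apply Rinv_lt_contravar; auto.
    apply Rmult_lt_0_compat; auto. apply Rinv_0_lt_compat; auto. }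
  assert (Hq0 : 0 < / r n) by (apply Rinv_0_lt_compat; auto).
  apply Rabs_def2 in a. apply Rabs_def2 in b. apply Rabs_def2 in cc.
  unfold Rdiv in *.
  pose proof (Rmax_l Lxz Lyz). pose proof (Rmax_r Lxz Lyz).
  pose proof (Hu (x n) (y n) (z n)) as Hxyz.
  unfold Rmax at 1 in Hxyz. destruct (Rle_dec _ _) in Hxyz.
  - assert (d' (x n) (y n) * / r n <= (d' (y n) (z n) + 1) * / r n)
      by (apply Rmult_le_compat_r; lra).
    rewrite Rmult_plus_distr_r in H4. unfold eps in *. lra.
  - assert (d' (x n) (y n) * / r n <= (d' (x n) (z n) + 1) * / r n)
      by (apply Rmult_le_compat_r; lra).
    rewrite Rmult_plus_distr_r in H4. unfold eps in *. lra.
Qed.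

Lemma forward d D n : is_metric d -> control_function d n D -> asdim_AN_le (dd d D) n.
Proof.
  intros Hm [HD1 [HD2 HD3]]. pose proof Hm as [Hn [Hz [Hs Ht]]].
  exists 1, 2. split; [lra|]. split; [intros; lra|split; [intros; lra|]].
  intros s Hs0. destruct (nat_between s Hs0) as [K HK].
  pose proof (tt_nonneg D K) as HtK.
  destruct (HD3 (tt D K + 1) ltac:(lra)) as [U [Hc Hb]].
  exists U. split; auto. intros i Hi x y Hxy.
  assert (Hsc : scale_connected d (tt D K + 1) (U i) x y).
  { eapply sc_map; [| |exact Hxy]; auto. intros a b _ _ Hab. unfold dd in Hab.
    destruct (Rle_or_lt (d a b) 0) as [h|h]; [lra|].
    rewrite phi_pos in Hab by auto.
    assert (INR (hn D (d a b)) < INR K) by lra. apply INR_lt in H.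
    pose proof (hn_spec D (d a b) (Hn a b)). pose proof (tt_mono D (S (hn D (d a b))) K H). lra. }
  pose proof (Hb i Hi x y Hsc) as Hdxy.
  unfold dd. eapply Rle_trans. apply (phi_mono D _ _ (Hn x y) Hdxy).
  eapply Rle_trans. apply phi_le_hn.
  assert (Nat.lt (hn D (D (tt D K + 1))) (S K)).
  { apply (hn_lt D). pose proof (Hn x y); lra. apply (tt_D D). }
  assert (INR (hn D (D (tt D K + 1))) <= INR K) by (apply le_INR; lia). lra.
Qed.

Lemma backward d D n : is_metric d -> asdim_AN_le (dd d D) n -> asdim_le d n.
Proof.
  intros Hm [C [k [HC [HD1 [HD2 HD3]]]]]. pose proof Hm as [Hn [Hz [Hs Ht]]].
  destruct (nat_above C) as [c0 Hc0]. destruct (nat_above k) as [k0 Hk0].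
  set (M := fun j : nat => (c0 * (j + 2) + k0)%nat).
  assert (HMmono : forall i j, (i <= j)%nat -> (M i <= M j)%nat) by (intros; unfold M; nia).
  assert (HMR : forall j, INR (M j) = INR c0 * (INR j + 2) + INR k0).
  { intros j. unfold M. rewrite plus_INR, mult_INR, plus_INR. simpl. lra. }
  exists (fun s => tt D (M (hn D s))). split; [|split].
  - intros s t Hs0 Hst. apply tt_mono. apply HMmono. apply hn_mono; lra.
  - intros. apply tt_nonneg.
  - intros s Hs0. set (sg := 2 + INR (hn D s)).
    assert (Hsg : 0 < sg) by (unfold sg; pose proof (pos_INR (hn D s)); lra).
    destruct (HD3 sg Hsg) as [U [Hc Hb]]. exists U. split; auto.
    intros i Hi x y Hxy.
    assert (Hsc : scale_connected (dd d D) sg (U i) x y).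
    { eapply sc_map; [| |exact Hxy]; auto. intros a b _ _ Hab. unfold dd.
      eapply Rle_lt_trans. apply phi_le_hn.
      assert (hn D (d a b) <= hn D s)%nat by (apply hn_mono; [apply Hn|lra]).
      apply le_INR in H. unfold sg. lra. }
    pose proof (Hb i Hi x y Hsc) as Hb'. unfold dd in Hb'.
    destruct (Rle_or_lt (d x y) 0) as [h|h]. pose proof (tt_nonneg D (M (hn D s))); lra.
    rewrite phi_pos in Hb' by auto.
    assert (C * sg <= INR c0 * sg) by (apply Rmult_le_compat_r; lra).
    assert (INR (S (hn D (d x y))) <= INR (M (hn D s))).
    { rewrite S_INR, HMR. unfold sg in *. lra. }
    apply INR_le in H0.
    pose proof (hn_spec D (d x y) (Hn x y)). pose proof (tt_mono D _ _ H0). lra.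
Qed.

Lemma main_gen d : is_metric d -> finite_asdim d ->
  exists D, good_remetrization d (dd d D).
Proof.
  intros Hm Hf. destruct (least _ Hf) as [m [[D HD] Hmin]].
  exists D. pose proof Hm as [Hn [Hz [Hs Ht]]].
  split; [apply dd_metric; auto|split; [|split]].
  - split.
    + exists (phi D), (phi D). split; [intros u v; apply phi_mono|].
      split; [intros u v; apply phi_mono|]. split.
      * intros M0. destruct (nat_above M0) as [N HN]. exists (tt D N + 1).
        intros u Hu. pose proof (tt_nonneg D N).
        rewrite phi_pos by lra. pose proof (hn_ge D u N ltac:(lra) ltac:(lra)) as HH.
        apply le_INR in HH. lra.
      * intros x y. unfold dd. lra.
    + exists 0. split; [lra|]. intros y. exists y. unfold dd.
      assert (d y y = 0) by (apply Hz; auto). rewrite H.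
      unfold phi. destruct (Rle_dec 0 0); lra.
  - intros n. split.
    + apply backward; auto.
    + intros Hn'. apply (forward d D n Hm). apply (cf_mono d m n D HD). apply Hmin; auto.
  - apply cone_ult. apply dd_ult. auto.
Qed.

End Gen.

Theorem mainTheorem7 :
  (forall (X : Type) (d : X -> X -> R),
     is_metric d -> finite_asdim d ->
     exists d' : X -> X -> R, good_remetrization d d') /\
  (forall (G : Type) (mul : G -> G -> G) (inv : G -> G) (e : G) (d : G -> G -> R),
     is_group mul inv e -> @countable_type G ->
     proper_left_invariant_metric mul d -> finite_asdim d ->
     exists d' : G -> G -> R,
       good_remetrization d d' /\ proper_left_invariant_metric mul d').
Proof.
  split.
  - intros X d Hm Hf. destruct (main_gen X d Hm Hf) as [D HD]. eauto.
  - intros G mul inv e d _ _ [Hm [Hli Hpr]] Hf.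
    destruct (main_gen G d Hm Hf) as [D HD]. exists (dd G d D). split; auto.
    split; [apply dd_metric; auto|split].
    + intros g h k. unfold dd. rewrite Hli. auto.
    + intros g rad. destruct (nat_above rad) as [K HK].
      destruct (Hpr g (tt D K)) as [l Hl]. exists l. intros h Hh. apply Hl.
      pose proof Hm as [Hn _]. unfold dd in Hh.
      destruct (Rle_or_lt (d g h) 0) as [h0|h0]. pose proof (tt_nonneg D K); lra.
      rewrite phi_pos in Hh by auto.
      assert (INR (S (hn D (d g h))) <= INR K) by (rewrite S_INR; lra).
      apply INR_le in H. pose proof (hn_spec D (d g h) (Hn g h)).
      pose proof (tt_mono D _ _ H). lra.
Qed.
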